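(* Let $F=\breve F(\alpha_1,\dots,\alpha_t)$ be a fence, $i\in[t]$ and $j,k\in[\beta_i]$. If $S_i$ does not have a valley, then $k\hat\chi_{(i,j)}-j\hat\chi_{(i,k)}\equiv k-j$. If $S_i$ does not have a peak, then $(\alpha_i-k)\hat\chi_{(i,j)}-(\alpha_i-j)\hat\chi_{(i,k)}\equiv 0$.
   Context: Fences: let $\alpha=(\alpha_1,\dots,\alpha_t)$ be positive integers with $t\ge2$ and $\alpha_1,\alpha_t\ge2$. Put $a_0=0$, $a_i=\alpha_1+\dots+\alpha_i$, $n=a_t-1$. The fence $\breve F(\alpha)$ is the poset on $\{x_1,\dots,x_n\}$ whose cover relations are: for $1\le j\le n-1$ with $a_{i-1}\le j<a_i$, $x_j\lessdot x_{j+1}$ if $i$ is odd and $x_j\gtrdot x_{j+1}$ if $i$ is even. Segments: $S_1=\{x_j:1\le j\le a_1\}$, $S_i=\{x_j:a_{i-1}\le j\le a_i\}$ for $2\le i\le t-1$, $S_t=\{x_j:a_{t-1}\le j\le n\}$. Shared elements $x_{a_i}$ ($i\in[t-1]$) are peaks (cover two elements) or valleys (covered by two elements); a segment has a peak/valley if it contains one. $\breve S_i$ is the set of non-shared elements of $S_i$, $\beta_i=\alpha_i-1=\#\breve S_i$, $s_{(i,j)}$ is the $j$-th smallest element of $\breve S_i$, and $\hat\chi_{(i,j)}(I)=1$ if $s_{(i,j)}\in I$, else $0$, for order ideals $I\in\mathcal J(F)$. $T_q(I)=1$ if $q\in\min(F\setminus I)$, $-1$ if $q\in\max(I)$, $0$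 otherwise. $f\equiv g$ means $f-g=\sum_{q\in F}c_qT_q$ for real constants $c_q$; a real number denotes the constant function. *)

(* Defs.v *)
From HB Require Import structures.
From mathcomp Require Import all_boot all_order all_algebra.
From mathcomp Require Import Rstruct.
From Stdlib Require Rdefinitions.
Notation R := Rdefinitions.R.
Unset Printing Implicit Defensive.
Import Order.TTheory GRing.Theory Num.Theory.

Section Fence.
Variable alpha : seq nat.

(* t = number of parts, alpha_i (1-based), a_i = alpha_1 + ... + alpha_i *)
Definition ft : nat := size alpha.
Definition falpha (i : nat) : nat := nth 0 alpha i.-1.
Definition fa (i : nat) : nat := sumn (take i alpha).
Definition fbeta (i : nat) : nat := (falpha i).-1.
Definition fn : nat := (fa ft).-1.

(* Element x_j (1 <= j <= n) is represented by p : 'I_fn with j = p.+1. *)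
Definition pos (p : 'I_fn) : nat := p.+1.

Definition seg_parity (j : nat) (b : bool) : bool :=
  has (fun i => (fa i.-1 <= j < fa i) && (odd i == b)) (iota 1 ft).

(* cover relation: fcover x y  <->  x is covered by y (x ⋖ y) *)
Definition fcover : rel 'I_fn := fun x y =>
  ((pos y == (pos x).+1) && seg_parity (pos x) true)      (* x_j ⋖ x_{j+1}, i odd *)
  || ((pos x == (pos y).+1) && seg_parity (pos y) false). (* x_j ⋗ x_{j+1}, i even *)

Definition fle : rel 'I_fn := connect fcover.
Definition flt : rel 'I_fn := fun x y => (x != y) && fle x y.

Definition is_ideal (I : {set 'I_fn}) : bool :=
  [forall x, forall y, fle x y ==> (y \in I) ==> (x \in I)].

Definition in_min_compl (I : {set 'I_fn}) (q : 'I_fn) : bool :=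
  (q \notin I) && [forall y, flt y q ==> (y \in I)].
Definition in_max (I : {set 'I_fn}) (q : 'I_fn) : bool :=
  (q \in I) && [forall y, flt q y ==> (y \notin I)].
Definition toggle (q : 'I_fn) (I : {set 'I_fn}) : R :=
  if in_min_compl I q then 1%R else if in_max I q then (-1)%R else 0%R.

Definition tequiv (f g : {set 'I_fn} -> R) : Prop :=
  exists c : 'I_fn -> R, forall I, is_ideal I ->
    (f I - g I)%R = \big[+%R/0%R]_(q : 'I_fn) (c q * toggle q I)%R.

Definition is_shared (x : 'I_fn) : bool :=
  has (fun m => pos x == fa m) (iota 1 ft.-1).
Definition is_peak (x : 'I_fn) : bool :=
  is_shared x && (#|[set y | fcover y x]| == 2).
Definition is_valley (x : 'I_fn) : bool :=
  is_shared x && (#|[set y | fcover x y]| == 2).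

Definition segment (i : nat) : {set 'I_fn} :=
  [set x | if i == 1 then pos x <= fa 1
           else if i == ft then fa ft.-1 <= pos x
           else fa i.-1 <= pos x <= fa i].
Definition has_peak (i : nat) : bool := [exists x in segment i, is_peak x].
Definition has_valley (i : nat) : bool := [exists x in segment i, is_valley x].

Definition breveS (i : nat) : {set 'I_fn} := segment i :\: [set x | is_shared x].

Definition hchi (i j : nat) (I : {set 'I_fn}) : R :=
  match [pick q in breveS i | #|[set y in breveS i | flt y q]| == j.-1] with
  | Some q => if q \in I then 1%R else 0%R
  | None => 0%R
  end.

End Fence.

(* Main.v *)
Require Import Defs.
From HB Require Import structures.
From mathcomp Require Import all_boot all_order all_algebra.
From mathcomp Require Import Rstruct.
From mathcomp Require Import zify ring lra.
Import Order.TTheory GRing.Theory Num.Theory.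



Lemma connect_inv (T : finType) (e : rel T) (P : pred T) x y :
  (forall u v, e u v -> P u -> P v) -> connect e x y -> P x -> P y.
Proof.
move=> H /connectP [p]; elim: p x => [|z p IH] x /=; first by move=> _ ->.
by case/andP => exz pz ey Px; apply: (IH z) => //; exact: H exz Px.
Qed.

Section Fence.
Variable alpha : seq nat.
Hypothesis Hsz : (2 <= size alpha)%N.
Hypothesis Hpos : all (fun x => 0 < x)%N alpha.
Hypothesis Hhd : (2 <= head 0 alpha)%N.
Hypothesis Hlast : (2 <= last 0 alpha)%N.

Local Notation t := (ft alpha).
Local Notation n := (fn alpha).
Local Notation fa := (fa alpha).
Local Notation sp := (seg_parity alpha).

Lemma fa_mono m m' : m <= m' -> fa m <= fa m'.
Proof.
move=> le; rewrite /Defs.fa -(subnKC le) takeD sumn_cat; exact: leq_addr.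
Qed.

Lemma fa_succ m : m < t -> fa m.+1 = fa m + nth 0 alpha m.
Proof.
move=> lt; rewrite /Defs.fa -addn1 takeD sumn_cat (drop_nth 0 lt) /= take0 /=.
by rewrite addn0.
Qed.

Lemma alpha_pos m : m < t -> 0 < nth 0 alpha m.
Proof. by move=> lt; apply: (all_nthP 0 Hpos). Qed.

Lemma fa_lt m : m < t -> fa m < fa m.+1.
Proof. by move=> lt; rewrite fa_succ // -addn1 leq_add2l alpha_pos. Qed.

Lemma fa0 : fa 0 = 0. Proof. by rewrite /Defs.fa take0. Qed.

Lemma fa1 : fa 1 = head 0 alpha.
Proof. by rewrite /Defs.fa; case: alpha => [|x s] //=; rewrite take0 /= addn0. Qed.

Lemma fa_t : fa t = fa t.-1 + last 0 alpha.
Proof.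
have h : t.-1 < t by rewrite /ft; case: (size alpha) Hsz.
by rewrite -{1}(prednK (leq_ltn_trans (leq0n _) h)) fa_succ // /ft nth_last.
Qed.

Lemma n_def : n.+1 = fa t.
Proof. rewrite /fn fa_t; have := Hlast; lia. Qed.

Lemma seg_par_at i p b : 1 <= i <= t -> fa i.-1 <= p < fa i -> sp p b = (odd i == b).
Proof.
move=> /andP[i1 it] /andP[lo hi]; apply/hasP/idP.
  case=> i' /[!mem_iota] /andP[i'1 i't] /andP[/andP[lo' hi'] /eqP <-].
  case: (ltngtP i' i) => [lt|gt|-> //].
    have : fa i' <= fa i.-1 by apply: fa_mono; lia.
    lia.
  have : fa i <= fa i'.-1 by apply: fa_mono; lia.
  lia.
move=> e; exists i; first by rewrite mem_iota; lia.
by rewrite lo hi e.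
Qed.


Local Notation pos := (@pos alpha).

Lemma fcoverE u v : fcover alpha u v =
  ((pos v == (pos u).+1) && sp (pos u) true) || ((pos u == (pos v).+1) && sp (pos v) false).
Proof. by []. Qed.

Lemma fcover_neq u v : fcover alpha u v -> u != v.
Proof.
rewrite fcoverE; apply: contraTneq => ->.
by rewrite -[X in X == _]addn0 -addn1 eqn_add2l.
Qed.

Lemma fle_inc x y : ~~ sp (pos x).-1 false -> fle alpha x y -> pos x <= pos y.
Proof.
move=> hx hxy; apply: (@connect_inv _ _ (fun u => pos x <= pos u) _ _ _ hxy (leqnn _)).
move=> u v; rewrite /= fcoverE.
case/orP => /andP[/eqP e h] le; first lia.
case: (ltnP (pos v) (pos x)) => // lt.
have ex : pos v = (pos x).-1 by lia.
by rewrite ex (negbTE hx) in h.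
Qed.

Lemma fle_dec x y : ~~ sp (pos x) true -> fle alpha x y -> pos y <= pos x.
Proof.
move=> hx hxy; apply: (@connect_inv _ _ (fun u => pos u <= pos x) _ _ _ hxy (leqnn _)).
move=> u v; rewrite /= fcoverE.
case/orP => /andP[/eqP e h] le; last lia.
case: (ltnP (pos u) (pos x)) => lt; first lia.
have ex : pos u = pos x by lia.
by rewrite ex (negbTE hx) in h.
Qed.

Lemma posP p : 0 < p <= n -> {y : 'I_n | pos y = p}.
Proof.
move=> /andP[p0 pn]; have h : p.-1 < n by lia.
by exists (Ordinal h); rewrite /Defs.pos /=; lia.
Qed.

Lemma chain_inc d x y : pos y = pos x + d ->
  (forall r, pos x <= r < pos y -> sp r true) -> fle alpha x y.
Proof.
elim: d y => [|d IH] y e H.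
  have -> : y = x by apply: ord_inj; rewrite /Defs.pos in e; lia.
  exact: connect0.
have [z ez] : {z : 'I_n | pos z = pos x + d}.
  apply: posP; have := ltn_ord y; rewrite /Defs.pos in e *; lia.
apply: connect_trans (IH z ez _) (connect1 _).
  by move=> r hr; apply: H; lia.
by rewrite fcoverE ez e addnS eqxx H /=; lia.
Qed.

Lemma chain_dec d x y : pos y = pos x + d ->
  (forall r, pos x <= r < pos y -> sp r false) -> fle alpha y x.
Proof.
elim: d y => [|d IH] y e H.
  have -> : y = x by apply: ord_inj; rewrite /Defs.pos in e; lia.
  exact: connect0.
have [z ez] : {z : 'I_n | pos z = pos x + d}.
  apply: posP; have := ltn_ord y; rewrite /Defs.pos in e *; lia.
apply: connect_trans (connect1 _) (IH z ez _).
  by rewrite fcoverE ez e addnS eqxx H /= ?orbT //; lia.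
by move=> r hr; apply: H; lia.
Qed.

Lemma idealP {I x y} : is_ideal alpha I -> fle alpha x y -> y \in I -> x \in I.
Proof. by move=> /forallP/(_ x)/forallP/(_ y)/implyP H /H /implyP. Qed.

Lemma low_ok I q : is_ideal alpha I ->
  [forall y, flt alpha y q ==> (y \in I)] = [forall y, fcover alpha y q ==> (y \in I)].
Proof.
move=> hI; apply/forallP/forallP => H y; apply/implyP => hy.
  by apply: (implyP (H y)); rewrite /flt fcover_neq //; exact: connect1.
case/andP: hy => ne /connectP [p pth ey].
move: pth ey; case/lastP: p => [|p z]; first by move=> _ /= e; rewrite e eqxx in ne.
rewrite rcons_path last_rcons => /andP [pth cz] ez; subst z.
have hyz : fle alpha y (last y p) by apply/connectP; exists p.
apply: (idealP hI hyz); exact: (implyP (H _)).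
Qed.

Lemma up_ok I q : is_ideal alpha I ->
  [forall y, flt alpha q y ==> (y \notin I)] = [forall y, fcover alpha q y ==> (y \notin I)].
Proof.
move=> hI; apply/forallP/forallP => H y; apply/implyP => hy.
  by apply: (implyP (H y)); rewrite /flt fcover_neq //; exact: connect1.
case/andP: hy => ne /connectP [p pth ey].
move: pth ey; case: p => [|z p]; first by move=> _ /= e; rewrite e eqxx in ne.
rewrite /= => /andP [cz pth] ey; apply/negP => yI.
have hzy : fle alpha z y by apply/connectP; exists p.
have zI : z \in I by apply: (idealP hI hzy).
by have := implyP (H z) cz; rewrite zI.
Qed.

Local Open Scope ring_scope.

Definition Xb (d : bool) (I : {set 'I_n}) (p : nat) : bool :=
  if (0 < p <= n)%N then [exists q, (pos q == p) && (q \in I)] else d.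

Lemma Xb_pos d I q : Xb d I (pos q) = (q \in I).
Proof.
rewrite /Xb /Defs.pos ltn0Sn ltn_ord /=.
apply/existsP/idP => [[y /andP[/eqP e yI]]|qI]; last by exists q; rewrite eqxx.
by have -> : q = y by apply: ord_inj; case: e.
Qed.

Lemma Xb_out d I p : ~~ (0 < p <= n)%N -> Xb d I p = d.
Proof. by rewrite /Xb => /negbTE ->. Qed.

Lemma Xb_in d d' I p : (0 < p <= n)%N -> Xb d I p = Xb d' I p.
Proof. by rewrite /Xb => ->. Qed.

Lemma forall_at_in (I : {set 'I_n}) p (P : 'I_n -> bool) : (forall y, P y = (pos y == p)) ->
  [forall y, P y ==> (y \in I)] = Xb true I p.
Proof.
move=> HP; rewrite /Xb; case: ifP => hp.
  apply/forallP/existsP => [H|[y0 /andP[/eqP e0 y0I]] y].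
    have [y ey] := posP _ hp; exists y; rewrite ey eqxx /=.
    by have := H y; rewrite HP ey eqxx.
  rewrite HP; apply/implyP => /eqP e.
  by have -> : y = y0 by apply: ord_inj; rewrite /Defs.pos in e e0; lia.
apply/forallP => y; rewrite HP; apply/implyP => /eqP e.
by move: hp; rewrite -e /Defs.pos ltn0Sn ltn_ord.
Qed.

Lemma forall_at_out (I : {set 'I_n}) p (P : 'I_n -> bool) : (forall y, P y = (pos y == p)) ->
  [forall y, P y ==> (y \notin I)] = ~~ Xb false I p.
Proof.
move=> HP; rewrite /Xb; case: ifP => hp.
  rewrite negb_exists; apply/forallP/forallP => H y; have := H y.
    by rewrite HP; case: (pos y == p); case: (y \in I).
  by rewrite HP; case: (pos y == p); case: (y \in I).
apply/forallP => y; rewrite HP; apply/implyP => /eqP e.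
by move: hp; rewrite -e /Defs.pos ltn0Sn ltn_ord.
Qed.

Lemma bool_tog (l m u : bool) : (m -> l) -> (u -> m) ->
  (if ~~ m && l then 1 else if m && ~~ u then -1 else 0 : R)
    = (l : nat)%:R - 2 * (m : nat)%:R + (u : nat)%:R.
Proof.
case: l; case: m; case: u => //= H1 H2; try (by have := H1 isT); try (by have := H2 isT).
all: rewrite ?mulr1 ?mulr0 ?subr0 ?addr0; try ring.
Qed.

Lemma toggle_gen (I : {set 'I_n}) q : is_ideal alpha I ->
  toggle alpha q I =
  ([forall y, fcover alpha y q ==> (y \in I)] : nat)%:R - 2 * ((q \in I) : nat)%:R
  + ((~~ [forall y, fcover alpha q y ==> (y \notin I)]) : nat)%:R.
Proof.
move=> hI; rewrite /toggle /in_min_compl /in_max low_ok // up_ok //.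
rewrite -bool_tog ?negbK //.
  move=> qI; apply/forallP => y; apply/implyP => c.
  exact: (idealP hI (connect1 c) qI).
rewrite negb_forall => /existsP [y]; rewrite negb_imply negbK => /andP[c yI].
exact: (idealP hI (connect1 c) yI).
Qed.

Lemma toggle_inc (I : {set 'I_n}) q : is_ideal alpha I ->
  sp (pos q).-1 true -> sp (pos q) true -> ~~ sp (pos q).-1 false -> ~~ sp (pos q) false ->
  toggle alpha q I = (Xb true I (pos q).-1 : nat)%:R - 2 * ((q \in I) : nat)%:R
                      + (Xb false I (pos q).+1 : nat)%:R.
Proof.
move=> hI h1 h2 h3 h4; rewrite toggle_gen //.
have HL : forall y, fcover alpha y q = (pos y == (pos q).-1).
  move=> y; rewrite fcoverE (negbTE h4) andbF orbF.
  apply/andP/eqP => [[/eqP e _]|e]; first by rewrite e.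
  by split; [rewrite e /Defs.pos /= | rewrite e].
have HU : forall y, fcover alpha q y = (pos y == (pos q).+1).
  move=> y; rewrite fcoverE h2 andbT.
  apply/orP/idP => [[->//| /andP[/eqP e b]] | ->]; last by left.
  have e' : pos y = (pos q).-1 by rewrite e.
  by rewrite e' (negbTE h3) in b.
by rewrite (forall_at_in I _ _ HL) (forall_at_out I _ _ HU) negbK.
Qed.

Lemma toggle_dec (I : {set 'I_n}) q : is_ideal alpha I ->
  ~~ sp (pos q).-1 true -> ~~ sp (pos q) true -> sp (pos q).-1 false -> sp (pos q) false ->
  toggle alpha q I = (Xb true I (pos q).+1 : nat)%:R - 2 * ((q \in I) : nat)%:R
                      + (Xb false I (pos q).-1 : nat)%:R.
Proof.
move=> hI h1 h2 h3 h4; rewrite toggle_gen //.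
have HU : forall y, fcover alpha q y = (pos y == (pos q).-1).
  move=> y; rewrite fcoverE (negbTE h2) andbF orFb.
  apply/andP/eqP => [[/eqP e _]|e]; first by rewrite e.
  by split; [rewrite e /Defs.pos /= | rewrite e].
have HL : forall y, fcover alpha y q = (pos y == (pos q).+1).
  move=> y; rewrite fcoverE h4 andbT.
  apply/orP/idP => [[/andP[/eqP e b] | ->//] | ->]; last by right.
  have e' : pos y = (pos q).-1 by rewrite e.
  by rewrite e' (negbTE h1) in b.
by rewrite (forall_at_in I _ _ HL) (forall_at_out I _ _ HU) negbK.
Qed.

Definition Z (f : {set 'I_n} -> R) : Prop :=
  exists c : 'I_n -> R, forall I, is_ideal alpha I ->
    f I = \big[+%R/0%R]_(q : 'I_n) (c q * toggle alpha q I)%R.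

Lemma Z_ext {f g} : (forall I, is_ideal alpha I -> f I = g I) -> Z f -> Z g.
Proof. by move=> e [c Hc]; exists c => I hI; rewrite -e // Hc. Qed.

Lemma Z_lin a b {f g} : Z f -> Z g -> Z (fun I => a * f I + b * g I).
Proof.
move=> [c Hc] [d Hd]; exists (fun q => a * c q + b * d q) => I hI.
rewrite Hc // Hd // !mulr_sumr -big_split /=; apply: eq_bigr => q _; ring.
Qed.

Lemma Z_tog q : Z (toggle alpha q).
Proof.
exists (fun q' => ((q' == q) : nat)%:R) => I _.
rewrite (bigD1 q) //= eqxx mul1r big1 ?addr0 // => q' /negbTE ->; by rewrite mul0r.
Qed.

Lemma Z0 : Z (fun _ => 0).
Proof. by exists (fun _ => 0) => I _; rewrite big1 // => q _; rewrite mul0r. Qed.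

Lemma chain_lin {N : nat} {X : nat -> {set 'I_n} -> R} :
  (forall m, (1 <= m <= N)%N -> Z (fun I => X m.-1 I - 2 * X m I + X m.+1 I)) ->
  forall m, (m <= N.+1)%N -> Z (fun I => X m I - X 0%N I - m%:R * (X 1%N I - X 0%N I)).
Proof.
move=> HT m; elim: m {-2}m (leqnn m) => [|M IH] m hm.
  rewrite leqn0 in hm; move/eqP: hm => -> _.
  by apply: Z_ext Z0 => I _; rewrite mul0r; ring.
case: m hm => [|[|m]] hm hN.
- by apply: Z_ext Z0 => I _; rewrite mul0r; ring.
- by apply: Z_ext Z0 => I _; rewrite mul1r; ring.
have A := HT m.+1 ltac:(lia).
have B := IH m.+1 ltac:(lia) ltac:(lia).
have C := IH m ltac:(lia) ltac:(lia).
have D := Z_lin 1 2 A B.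
have E := Z_lin 1 (-1) D C.
apply: Z_ext E => I _ /=.
rewrite -[m.+2]addn2 -[m.+1]addn1 !natrD; ring.
Qed.

Lemma chain2 N (X : nat -> {set 'I_n} -> R) :
  (forall m, (1 <= m <= N)%N -> Z (fun I => X m.-1 I - 2 * X m I + X m.+1 I)) ->
  forall j k, (j <= N.+1)%N -> (k <= N.+1)%N ->
  Z (fun I => k%:R * X j I - j%:R * X k I - (k%:R - j%:R) * X 0%N I).
Proof.
move=> HT j k hj hk.
have E := Z_lin k%:R (- j%:R) (chain_lin HT j hj) (chain_lin HT k hk).
by apply: Z_ext E => I _; ring.
Qed.

Lemma pos_eqE (y z : 'I_n) : (y == z) = (pos y == pos z).
Proof. by rewrite /Defs.pos eqSS. Qed.

Lemma pos_le_n (y : 'I_n) : (0 < pos y <= n)%N.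
Proof. by rewrite /Defs.pos ltn0Sn ltn_ord. Qed.

Lemma card_int lo d : (1 <= lo)%N -> (lo + d <= n.+1)%N ->
  #|[set y : 'I_n | (lo <= pos y < lo + d)%N]| = d.
Proof.
move=> hlo; elim: d => [|d IH] hd.
  have -> : [set y : 'I_n | (lo <= pos y < lo + 0)%N] = set0.
    by apply/setP => y; rewrite !inE addn0; apply/negbTE; apply/negP; lia.
  by rewrite cards0.
have [z ez] := posP (lo + d) ltac:(lia).
have -> : [set y : 'I_n | (lo <= pos y < lo + d.+1)%N] =
          z |: [set y : 'I_n | (lo <= pos y < lo + d)%N].
  apply/setP => y; rewrite !inE pos_eqE ez.
  case: (ltngtP (pos y) (lo + d)) => h /=; lia.
rewrite cardsU1 IH; last lia.
by rewrite inE ez ltnn andbF.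
Qed.

Lemma shared_range x : is_shared alpha x -> (fa 1 <= pos x <= fa t.-1)%N.
Proof.
case/hasP => m; rewrite mem_iota => hm /eqP ->.
by rewrite !fa_mono //; lia.
Qed.

Lemma shared_at m x : (1 <= m <= t.-1)%N -> pos x = fa m -> is_shared alpha x.
Proof.
by move=> hm e; apply/hasP; exists m; rewrite ?mem_iota ?e //; lia.
Qed.

Lemma t_ge2 : (2 <= t)%N. Proof. exact: Hsz. Qed.

Lemma fa_t1_pos : (1 <= fa t.-1)%N.
Proof.
have h : (fa 1 <= fa t.-1)%N by apply: fa_mono; have := t_ge2; lia.
by rewrite fa1 in h; have := Hhd; lia.
Qed.

Lemma n_ge : (fa t.-1 + 2 <= n.+1)%N.
Proof. rewrite n_def fa_t; have := Hlast; lia. Qed.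

Lemma fa1_le : (fa 1 <= fa t.-1)%N.
Proof. by apply: fa_mono; have := t_ge2; lia. Qed.

Lemma breve1 x : (x \in breveS alpha 1) = (pos x < fa 1)%N.
Proof.
rewrite /breveS !inE /segment ?inE eqxx.
case: (ltngtP (pos x) (fa 1)) => h /=.
- rewrite ?andbT; apply/negP => sh; have := shared_range x sh; lia.
- by rewrite andbF.
- rewrite (shared_at 1 x) //; have := t_ge2; lia.
Qed.

Lemma breve_t x : (x \in breveS alpha t) = (fa t.-1 < pos x)%N.
Proof.
have t2 := t_ge2.
rewrite /breveS !inE /segment ?inE eqxx (_ : (t == 1) = false); last by apply/negbTE; lia.
case: (ltngtP (pos x) (fa t.-1)) => h /=.
- by rewrite andbF.
- rewrite ?andbT; apply/negP => sh; have := shared_range x sh; lia.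
- by rewrite (shared_at t.-1 x) //; lia.
Qed.

Lemma sp1 r b : (r < fa 1)%N -> sp r b = b.
Proof.
move=> h; rewrite (seg_par_at 1).
- by case: b.
- by have := t_ge2; lia.
- by rewrite fa0 h.
Qed.

Lemma spt r b : (fa t.-1 <= r < fa t)%N -> sp r b = (odd t == b).
Proof. by move=> h; rewrite (seg_par_at t) //; have := t_ge2; lia. Qed.

Lemma hchi_el i j (I : {set 'I_n}) (el : 'I_n) (idx : 'I_n -> nat) :
  (forall y, y \in breveS alpha i ->
     #|[set z in breveS alpha i | flt alpha z y]| = (idx y).-1) ->
  (forall y, y \in breveS alpha i -> 0 < idx y)%N ->
  (forall y, y \in breveS alpha i -> idx y = j -> y = el) ->
  el \in breveS alpha i -> idx el = j -> (0 < j)%N ->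
  hchi alpha i j I = ((el \in I) : nat)%:R.
Proof.
move=> Hc Hp Hu elB ej j0; rewrite /hchi; case: pickP => [q /andP[qB /eqP c] | H].
  have e : idx q = j by rewrite Hc // in c; have := Hp q qB; lia.
  by rewrite (Hu q qB e); case: (el \in I).
by have := H el; rewrite elB Hc // ej eqxx.
Qed.

Lemma breve1_set : breveS alpha 1 = [set x | (pos x < fa 1)%N].
Proof. by apply/setP => x; rewrite breve1 inE. Qed.

Lemma breve_t_set : breveS alpha t = [set x | (fa t.-1 < pos x)%N].
Proof. by apply/setP => x; rewrite breve_t inE. Qed.

Lemma falpha_t : falpha alpha t = last 0 alpha.
Proof. by rewrite /falpha /ft nth_last. Qed.

Lemma falpha_1 : falpha alpha 1 = fa 1.
Proof. by rewrite /falpha fa1; case: alpha. Qed.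

Lemma case1 j k : (1 <= j <= fbeta alpha 1)%N -> (1 <= k <= fbeta alpha 1)%N ->
  Z (fun I => k%:R * hchi alpha 1 j I - j%:R * hchi alpha 1 k I - (k%:R - j%:R)).
Proof.
rewrite /fbeta falpha_1 => hj hk.
have hn : (fa 1 <= n)%N by have := fa1_le; have := n_ge; lia.
pose X (m : nat) (I : {set 'I_n}) := ((Xb true I m : nat)%:R : R).
have HT : forall m, (1 <= m <= (fa 1).-1)%N -> Z (fun I => X m.-1 I - 2 * X m I + X m.+1 I).
  move=> m hm; have [q eq] := posP m ltac:(lia); apply: Z_ext (Z_tog q) => I hI.
  have h1 : sp (pos q).-1 true by rewrite eq sp1 //; lia.
  have h2 : sp (pos q) true by rewrite eq sp1 //; lia.
  have h3 : ~~ sp (pos q).-1 false by rewrite eq sp1 //; lia.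
  have h4 : ~~ sp (pos q) false by rewrite eq sp1 //; lia.
  rewrite (toggle_inc I q hI h1 h2 h3 h4) -(Xb_pos true I q) eq /X.
  by rewrite (Xb_in false true I m.+1) //; lia.
have HC : forall l, (1 <= l <= (fa 1).-1)%N -> forall I, hchi alpha 1 l I = X l I.
  move=> l hl I; have [el ee] := posP l ltac:(lia).
  rewrite (hchi_el 1 l I el (fun y => pos y)).
  - by rewrite /X -ee Xb_pos.
  - move=> y; rewrite breve1 => yB.
    have -> : [set z in breveS alpha 1 | flt alpha z y] =
              [set z | (1 <= pos z < 1 + (pos y).-1)%N].
      apply/setP => z; rewrite breve1_set !inE /flt pos_eqE.
      have pz := pos_le_n z; have py := pos_le_n y.
      apply/idP/idP.
        case/and3P => hz ne le.
        have := fle_inc z y ltac:(rewrite sp1 //; lia) le; lia.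
      move=> h; apply/and3P; split; [lia | lia |].
      apply: (chain_inc (pos y - pos z)); first lia.
      by move=> r hr; rewrite sp1 //; lia.
    by rewrite card_int //; have := pos_le_n y; lia.
  - by move=> y _; have := pos_le_n y; lia.
  - by move=> y _ e; apply: ord_inj; rewrite /Defs.pos in e ee; lia.
  - by rewrite breve1 ee; lia.
  - by [].
  - by lia.
have C := chain2 _ _ HT j k ltac:(lia) ltac:(lia).
apply: Z_ext C => I hI.
rewrite (HC j) ?(HC k) //.
by rewrite /X (Xb_out true I 0) //=; ring.
Qed.

Lemma fbeta_t : fbeta alpha t = (n - fa t.-1)%N.
Proof. rewrite /fbeta falpha_t; have := n_def; rewrite fa_t; have := Hlast; move=> h1 h2; rewrite (_ : n = (fa t.-1 + last 0 alpha).-1); last by rewrite -h2. lia. Qed.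

Lemma caset_even j k : ~~ odd t ->
  (1 <= j <= fbeta alpha t)%N -> (1 <= k <= fbeta alpha t)%N ->
  Z (fun I => k%:R * hchi alpha t j I - j%:R * hchi alpha t k I - (k%:R - j%:R)).
Proof.
rewrite fbeta_t => /negbTE ot hj hk.
have na := n_ge; have a1 := fa_t1_pos; have nd := n_def.
pose X (m : nat) (I : {set 'I_n}) := ((Xb true I (n.+1 - m) : nat)%:R : R).
have HT : forall m, (1 <= m <= n - fa t.-1)%N -> Z (fun I => X m.-1 I - 2 * X m I + X m.+1 I).
  move=> m hm; have [q eq] := posP (n.+1 - m) ltac:(lia); apply: Z_ext (Z_tog q) => I hI.
  have h1 : ~~ sp (pos q).-1 true by rewrite eq spt ?ot //; lia.
  have h2 : ~~ sp (pos q) true by rewrite eq spt ?ot //; lia.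
  have h3 : sp (pos q).-1 false by rewrite eq spt ?ot //; lia.
  have h4 : sp (pos q) false by rewrite eq spt ?ot //; lia.
  rewrite (toggle_dec I q hI h1 h2 h3 h4) -(Xb_pos true I q) /X.
  have e1 : (n.+1 - m.-1 = (pos q).+1)%N by lia.
  have e2 : (n.+1 - m.+1 = (pos q).-1)%N by lia.
  rewrite e1 e2 eq (Xb_in false true I (n.+1 - m).-1) //; lia.
have HC : forall l, (1 <= l <= n - fa t.-1)%N -> forall I, hchi alpha t l I = X l I.
  move=> l hl I; have [el ee] := posP (n.+1 - l) ltac:(lia).
  rewrite (hchi_el t l I el (fun y => n.+1 - pos y)%N).
  - by rewrite /X -ee Xb_pos.
  - move=> y; rewrite breve_t => yB.
    have -> : [set z in breveS alpha t | flt alpha z y] =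
              [set z | ((pos y).+1 <= pos z < (pos y).+1 + (n - pos y))%N].
      apply/setP => z; rewrite breve_t_set !inE /flt pos_eqE.
      have pz := pos_le_n z; have py := pos_le_n y.
      apply/idP/idP.
        case/and3P => hz ne le.
        have := fle_dec z y ltac:(rewrite spt ?ot //; lia) le; lia.
      move=> h; apply/and3P; split; [lia | lia |].
      apply: (chain_dec (pos z - pos y)); first lia.
      by move=> r hr; rewrite spt ?ot //; lia.
    by rewrite card_int //; have := pos_le_n y; lia.
  - by move=> y _; have := pos_le_n y; lia.
  - by move=> y _ e; apply: ord_inj; have := pos_le_n y; rewrite /Defs.pos in e ee *; lia.
  - by rewrite breve_t ee; lia.
  - by lia.
  - by lia.
have C := chain2 _ _ HT j k ltac:(lia) ltac:(lia).
apply: Z_ext C => I hI.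
rewrite (HC j) ?(HC k) //.
by rewrite /X subn0 (Xb_out true I n.+1) ?ltnn ?andbF //=; ring.
Qed.

Lemma caset_odd j k : odd t ->
  (1 <= j <= fbeta alpha t)%N -> (1 <= k <= fbeta alpha t)%N ->
  Z (fun I => ((falpha alpha t)%:R - k%:R) * hchi alpha t j I
              - ((falpha alpha t)%:R - j%:R) * hchi alpha t k I - 0).
Proof.
have fal : falpha alpha t = (fbeta alpha t).+1.
  by rewrite /fbeta falpha_t; have := Hlast; case: (last 0 alpha).
rewrite fal fbeta_t => ot hj hk.
have na := n_ge; have a1 := fa_t1_pos; have nd := n_def.
set a := fa t.-1.
set N := (n - a)%N.
pose X (m : nat) (I : {set 'I_n}) := ((Xb false I (a + m) : nat)%:R : R).
pose Y (m : nat) (I : {set 'I_n}) := X (N.+1 - m)%N I.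
have HT : forall m, (1 <= m <= N)%N -> Z (fun I => Y m.-1 I - 2 * Y m I + Y m.+1 I).
  move=> m hm; have [q eq] := posP (a + (N.+1 - m)) ltac:(lia).
  apply: Z_ext (Z_tog q) => I hI.
  have h1 : sp (pos q).-1 true by rewrite eq spt ?ot //; lia.
  have h2 : sp (pos q) true by rewrite eq spt ?ot //; lia.
  have h3 : ~~ sp (pos q).-1 false by rewrite eq spt ?ot //; lia.
  have h4 : ~~ sp (pos q) false by rewrite eq spt ?ot //; lia.
  rewrite (toggle_inc I q hI h1 h2 h3 h4) -(Xb_pos false I q) /Y /X.
  have e1 : (a + (N.+1 - m.-1) = (pos q).+1)%N by lia.
  have e2 : (a + (N.+1 - m.+1) = (pos q).-1)%N by lia.
  rewrite e1 e2 -eq (Xb_in true false I (pos q).-1); last lia.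
  ring.
have HC : forall l, (1 <= l <= N)%N -> forall I, hchi alpha t l I = X l I.
  move=> l hl I; have [el ee] := posP (a + l) ltac:(lia).
  rewrite (hchi_el t l I el (fun y => pos y - a)%N).
  - by rewrite /X -ee Xb_pos.
  - move=> y; rewrite breve_t => yB.
    have -> : [set z in breveS alpha t | flt alpha z y] =
              [set z | (a.+1 <= pos z < a.+1 + (pos y - a.+1))%N].
      apply/setP => z; rewrite breve_t_set !inE /flt pos_eqE.
      have pz := pos_le_n z; have py := pos_le_n y.
      apply/idP/idP.
        case/and3P => hz ne le.
        have := fle_inc z y ltac:(rewrite spt ?ot //; lia) le; lia.
      move=> h; apply/and3P; split; [lia | lia |].
      apply: (chain_inc (pos y - pos z)); first lia.
      by move=> r hr; rewrite spt ?ot //; lia.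
    by rewrite card_int //; [lia | have := pos_le_n y; lia].
  - by move=> y; rewrite breve_t; lia.
  - by move=> y _ e; apply: ord_inj; have := pos_le_n y; rewrite /Defs.pos in e ee *; lia.
  - by rewrite breve_t ee; lia.
  - by lia.
  - by lia.
have C := chain2 _ _ HT (N.+1 - j) (N.+1 - k) ltac:(lia) ltac:(lia).
apply: Z_ext C => I hI.
rewrite /Y !subKn ?(HC j) ?(HC k) //; try lia.
rewrite subn0 {3}/X (Xb_out false I (a + N.+1)); last lia.
rewrite !natrB //; try lia.
rewrite /=; ring.
Qed.

Lemma pv m x : (1 <= m <= t.-1)%N -> pos x = fa m ->
  if odd m then is_peak alpha x else is_valley alpha x.
Proof.
move=> hm ex.
have t2 := t_ge2; have na := n_ge; have nd := n_def.
have f1 : (fa 1 <= fa m)%N by apply: fa_mono; lia.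
have f2 : (fa m <= fa t.-1)%N by apply: fa_mono; lia.
have hh := Hhd; rewrite -fa1 in hh.
have l1 : (fa m.-1 < fa m)%N.
  by have := fa_lt m.-1 ltac:(lia); rewrite prednK //; lia.
have l2 : (fa m < fa m.+1)%N by apply: fa_lt; lia.
have spm1 : forall b, sp (fa m).-1 b = (odd m == b).
  by move=> b; apply: seg_par_at; lia.
have spm : forall b, sp (fa m) b = (odd m.+1 == b).
  by move=> b; apply: seg_par_at => /=; lia.
have sh : is_shared alpha x by apply: (shared_at m).
have [y1 e1] := posP (fa m).-1 ltac:(lia).
have [y2 e2] := posP (fa m).+1 ltac:(lia).
have ne : y1 != y2 by rewrite pos_eqE e1 e2; apply/eqP; lia.
case: ifP => om; rewrite /is_peak /is_valley sh /=; apply/eqP.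
  have -> : [set y | fcover alpha y x] = [set y1; y2]; last by rewrite cards2 ne.
  apply/setP => y; rewrite !inE !pos_eqE e1 e2 fcoverE ex spm /= om /=.
  rewrite andbT; apply/idP/idP.
    case/orP => [/andP[/eqP e _]|->]; last by rewrite orbT.
    by apply/orP; left; apply/eqP; lia.
  case/orP => /eqP e; last by rewrite e eqxx orbT.
  by rewrite e spm1 om /=; apply/orP; left; apply/eqP; lia.
have -> : [set y | fcover alpha x y] = [set y1; y2]; last by rewrite cards2 ne.
apply/setP => y; rewrite !inE !pos_eqE e1 e2 fcoverE ex spm /= om /=.
rewrite andbT; apply/idP/idP.
  case/orP => [->|/andP[/eqP e _]]; first by rewrite orbT.
  by apply/orP; left; apply/eqP; lia.
case/orP => /eqP e; last by rewrite e eqxx.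
by rewrite e spm1 om /=; apply/orP; right; apply/eqP; lia.
Qed.

Lemma seg_mem m i x : (1 <= m <= t.-1)%N -> pos x = fa m -> (i == m) || (i == m.+1) ->
  x \in segment alpha i.
Proof.
move=> hm ex hi; have t2 := t_ge2.
rewrite /segment inE ex.
case: eqP => [e1|n1].
  have -> : m = 1%N by move: hi; rewrite e1; case/orP => /eqP; lia.
  by [].
case: eqP => [et|nt].
  have -> : m = t.-1 by move: hi; rewrite et; case/orP => /eqP; lia.
  by [].
by rewrite !fa_mono //; case/orP: hi => /eqP; lia.
Qed.

Lemma fa_m_range m : (1 <= m <= t.-1)%N -> (0 < fa m <= n)%N.
Proof.
move=> hm; have t2 := t_ge2; have na := n_ge; have nd := n_def.
have f1 : (fa 1 <= fa m)%N by apply: fa_mono; lia.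
have f2 : (fa m <= fa t.-1)%N by apply: fa_mono; lia.
have hh := Hhd; rewrite -fa1 in hh; lia.
Qed.

Lemma has_valley_of m i : (1 <= m <= t.-1)%N -> ~~ odd m -> (i == m) || (i == m.+1) ->
  has_valley alpha i.
Proof.
move=> hm om hi; have [x ex] := posP (fa m) (fa_m_range m hm).
apply/existsP; exists x; rewrite (seg_mem m i x hm ex hi) /=.
by have := pv m x hm ex; rewrite (negbTE om).
Qed.

Lemma has_peak_of m i : (1 <= m <= t.-1)%N -> odd m -> (i == m) || (i == m.+1) ->
  has_peak alpha i.
Proof.
move=> hm om hi; have [x ex] := posP (fa m) (fa_m_range m hm).
apply/existsP; exists x; rewrite (seg_mem m i x hm ex hi) /=.
by have := pv m x hm ex; rewrite om.
Qed.

Lemma odd_pred' m : (0 < m)%N -> odd m.-1 = ~~ odd m.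
Proof. by case: m => //= m _; rewrite negbK. Qed.

Lemma main i j k :
  (1 <= i <= t)%N ->
  (1 <= j <= fbeta alpha i)%N -> (1 <= k <= fbeta alpha i)%N ->
    (~~ has_valley alpha i ->
       tequiv alpha (fun I => k%:R * hchi alpha i j I - j%:R * hchi alpha i k I)
              (fun _ => k%:R - j%:R))
    /\
    (~~ has_peak alpha i ->
       tequiv alpha (fun I => ((falpha alpha i)%:R - k%:R) * hchi alpha i j I
                        - ((falpha alpha i)%:R - j%:R) * hchi alpha i k I)
              (fun _ => 0)).
Proof.
move=> hi hj hk; have t2 := t_ge2.
have [i1|i1] := eqVneq i 1%N.
  subst i; split; first by move=> _; exact: case1.
  by move=> /negP[]; apply: (has_peak_of 1) => //; lia.
have [it|it] := eqVneq i t.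
  subst i; have otp := odd_pred' t ltac:(lia).
  case ot: (odd t); split.
  - move=> /negP[]; apply: (has_valley_of t.-1); [lia | by rewrite otp ot |].
    by rewrite prednK ?eqxx ?orbT //; lia.
  - by move=> _; apply: (caset_odd j k); rewrite ?ot.
  - by move=> _; apply: (caset_even j k); rewrite ?ot.
  - move=> /negP[]; apply: (has_peak_of t.-1); [lia | by rewrite otp ot |].
    by rewrite prednK ?eqxx ?orbT //; lia.
have oip := odd_pred' i ltac:(lia).
split; move=> /negP[].
  case oi: (odd i).
    apply: (has_valley_of i.-1); [ | by rewrite oip oi | ].
      by have : i != 1%N by []; lia.
    by rewrite prednK ?eqxx ?orbT //; lia.
  by apply: (has_valley_of i); [lia | by rewrite oi | by rewrite eqxx].
case oi: (odd i).
  by apply: (has_peak_of i); [lia | by rewrite oi | by rewrite eqxx].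
apply: (has_peak_of i.-1); [lia | by rewrite oip oi | ].
by rewrite prednK ?eqxx ?orbT //; lia.
Qed.

End Fence.

Local Open Scope ring_scope.

Theorem corollary4p2 (alpha : seq nat) :
  (2 <= size alpha)%N -> all (fun x => 0 < x)%N alpha ->
  (2 <= head 0 alpha)%N -> (2 <= last 0 alpha)%N ->
  forall i j k : nat,
    (1 <= i <= ft alpha)%N ->
    (1 <= j <= fbeta alpha i)%N -> (1 <= k <= fbeta alpha i)%N ->
    (~~ has_valley alpha i ->
       tequiv alpha (fun I => k%:R * hchi alpha i j I - j%:R * hchi alpha i k I)
              (fun _ => k%:R - j%:R))
    /\
    (~~ has_peak alpha i ->
       tequiv alpha (fun I => ((falpha alpha i)%:R - k%:R) * hchi alpha i j I
                        - ((falpha alpha i)%:R - j%:R) * hchi alpha i k I)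
              (fun _ => 0)).
Proof. by move=> h1 h2 h3 h4 i j k; apply: main. Qed.
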